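(* Suppose $\mathcal R\subset\mathcal G$ has Property 2. Then the kernel of the seminorm $\|\cdot\|_{\mathcal R}$ on $U_{\mathrm{per}}$ is $U_{\mathrm{iso},0,0}\cap U_{\mathrm{per}}$.
   Context: Euclidean group: $\mathrm E(n)$ consists of pairs $(A|b)$, $A\in\mathrm O(n)$, $b\in\mathbb R^n$, acting by $(A|b)\cdot x=Ax+b$, product $(A_1|b_1)(A_2|b_2)=(A_1A_2|b_1+A_1b_2)$; $\mathrm{rot}(A|b)=A$. Standing setting: $d=d_1+d_2$; $\mathcal S<\mathrm E(d_2)$ is a space group with translation subgroup $\mathcal T_{\mathcal S}$; $A\oplus(B|b)=(\mathrm{diag}(A,B)|(0,b))$; $\mathcal G$ is a discrete subgroup of $\mathrm E(d)$ contained in $\{A\oplus s:A\in\mathrm O(d_1),s\in\mathcal S\}$ projecting onto $\mathcal S$; $\mathcal T\subset\mathcal G$ maps bijectively onto $\mathcal T_{\mathcal S}$. There is $m_0\in\mathbb N$ such that $\mathcal T^N=\{t^N:t\in\mathcal T\}$ is a normal subgroup iff $N\in\mathcal M=m_0\mathbb N$, then isomorphic to $\mathbb Z^{d_2}$ of finite index; $\mathcal C_N$ is a fixed set of representatives of $\mathcal G/\mathcal T^N$. $U_{\mathrm{per}}$: maps $u:\mathcal G\to\mathbb R^d$ that are $\mathcal T^N$-periodic ($u(gt)=u(g)$ for $t\in\mathcal T^N$) for some $N\in\mathcal M$. $x_0\in\mathbb R^d$ with $g\mapsto g\cdot x_0$ injective; $d_{\mathrm{aff}}=\dim\mathrm{aff}(\mathcal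 G\cdot x_0)$; assumed $\mathcal G\cdot x_0\subset\{0_{d-d_{\mathrm{aff}}}\}\times\mathbb R^{d_{\mathrm{aff}}}$ and $\mathcal G$ acts trivially on $\mathbb R^{d-d_{\mathrm{aff}}}\times\{0\}$. For $\mathcal R\subset\mathcal G$, $U_{\mathrm{iso}}(\mathcal R)$ is the set of $v:\mathcal R\to\mathbb R^d$ with $a\in\mathbb R^d$, $S\in\mathrm{Skew}(d)$ such that $\mathrm{rot}(g)v(g)=a+S(g\cdot x_0-x_0)$ for all $g\in\mathcal R$. For finite $\mathcal R$ and $\mathcal T^N$-periodic $u$: $\|u\|_{\mathcal R}=\big(\frac1{|\mathcal C_N|}\sum_{g\in\mathcal C_N}\mathrm{dist}(u(g\,\cdot)|_{\mathcal R},U_{\mathrm{iso}}(\mathcal R))^2\big)^{1/2}$ (Euclidean distance in $(\mathbb R^d)^{\mathcal R}$). $U_{\mathrm{iso},0,0}$ is the set of $u:\mathcal G\to\mathbb R^d$ with $a\in\mathbb R^d$, $S\in\mathrm{Skew}(d_1)$ such that $\mathrm{rot}(g)u(g)=a+(S\oplus0_{d_2\times d_2})(g\cdot x_0-x_0)$ for all $g\in\mathcal G$. Property 1: $\mathcal R$ finite, $\mathrm{id}\in\mathcal R$, $\mathrm{aff}(\mathcal R\cdot x_0)=\mathrm{aff}(\mathcal G\cdot x_0)$. Property 2: $\mathcal R$ finite, and there are $\mathcal R',\mathcal R''$ with $\mathrm{id}\in\mathcal R'$, $\mathcal R'$ generating $\mathcal G$, $\mathcal R''$ with Property 1, and $\{gh:g\in\mathcal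 R',h\in\mathcal R''\}\subset\mathcal R$. *)

(* Defs.v *)
From mathcomp Require Import all_boot all_order all_algebra.
From mathcomp Require Import boolp classical_sets reals.
Set Implicit Arguments. Unset Strict Implicit. Unset Printing Implicit Defensive.
Import Order.TTheory GRing.Theory Num.Theory.
Local Open Scope ring_scope.

Section Euclid.
Variable R : realType.

Definition Eucl (n : nat) := ('M[R]_n * 'cV[R]_n)%type.

Definition orthogonal n (A : 'M[R]_n) : Prop := A^T *m A = 1%:M.
Definition skew n (A : 'M[R]_n) : Prop := A^T = - A.

Definition isE n (g : Eucl n) : Prop := orthogonal g.1.
Definition eid n : Eucl n := (1%:M, 0).
Definition emul n (g h : Eucl n) : Eucl n := (g.1 *m h.1, g.2 + g.1 *m h.2).
Definition einv n (g : Eucl n) : Eucl n := (g.1^T, - (g.1^T *m g.2)).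
Definition act n (g : Eucl n) (x : 'cV[R]_n) : 'cV[R]_n := g.1 *m x + g.2.
Definition rot n (g : Eucl n) : 'M[R]_n := g.1.
Fixpoint epow n (g : Eucl n) (k : nat) : Eucl n :=
  if k is k'.+1 then emul (epow g k') g else eid n.

Definition sqnorm n (x : 'cV[R]_n) : R := \sum_(i < n) x i 0 ^+ 2.
Definition edist2 n (g h : Eucl n) : R :=
  \sum_(i < n) \sum_(j < n) (g.1 i j - h.1 i j) ^+ 2 + sqnorm (g.2 - h.2).

Definition subgroup n (H : set (Eucl n)) : Prop :=
  [/\ (forall g, H g -> isE g), H (eid n),
      (forall g h, H g -> H h -> H (emul g h)) & (forall g, H g -> H (einv g))].

Definition discrete n (H : set (Eucl n)) : Prop :=
  exists2 eps : R, 0 < eps & forall g, H g -> g <> eid n -> eps <= edist2 g (eid n).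

Definition normal_sub n (G H : set (Eucl n)) : Prop :=
  [/\ subgroup H, (forall h, H h -> G h) &
      forall g h, G g -> H h -> H (emul (emul g h) (einv g))].

Inductive gen n (X : set (Eucl n)) : Eucl n -> Prop :=
| gen_id : gen X (eid n)
| gen_in g : X g -> gen X g
| gen_mul g h : gen X g -> gen X h -> gen X (emul g h)
| gen_inv g : gen X g -> gen X (einv g).

Definition space_group n (S : set (Eucl n)) : Prop :=
  [/\ subgroup S, discrete S &
      exists V : 'M[R]_n, V \in unitmx /\
        forall b : 'cV[R]_n,
          S (1%:M, b) <-> exists z : 'cV[int]_n, b = V *m map_mx (fun k : int => k%:~R) z].

Definition dsum d1 d2 (A : 'M[R]_d1) (s : Eucl d2) : Eucl (d1 + d2) :=
  (block_mx A 0 0 s.1, col_mx 0 s.2).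
Definition eproj d1 d2 (g : Eucl (d1 + d2)) : Eucl d2 := (drsubmx g.1, dsubmx g.2).

Definition Tpow n (T : set (Eucl n)) (N : nat) : set (Eucl n) :=
  fun x => exists t, T t /\ x = epow t N.

Definition inM (m0 N : nat) : Prop := (0 < N)%N /\ (m0 %| N)%N.

Definition reps n (G H : set (Eucl n)) (c : seq (Eucl n)) : Prop :=
  [/\ uniq c, (forall x, x \in c -> G x) &
      forall g, G g -> exists x, [/\ x \in c, H (emul (einv x) g) &
                 forall y, y \in c -> H (emul (einv y) g) -> y = x]].

Definition aff n (X : set 'cV[R]_n) : set 'cV[R]_n :=
  fun y => exists (k : nat) (p : 'I_k -> 'cV[R]_n) (l : 'I_k -> R),
    [/\ forall i, X (p i), \sum_(i < k) l i = 1 & y = \sum_(i < k) l i *: p i].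

Definition affdim n (Y : set 'cV[R]_n) (k : nat) : Prop :=
  exists p : 'I_k.+1 -> 'cV[R]_n,
    [/\ forall i, Y (p i),
        row_free (\matrix_(i < k) (p (lift ord0 i) - p ord0)^T) &
        forall y, Y y -> aff (fun x => exists i, x = p i) y].

Definition orbit n (G : set (Eucl n)) (x0 : 'cV[R]_n) : set 'cV[R]_n :=
  fun y => exists g, G g /\ y = act g x0.

Definition seq_orbit n (Rr : seq (Eucl n)) (x0 : 'cV[R]_n) : set 'cV[R]_n :=
  fun y => exists g, g \in Rr /\ y = act g x0.

Definition standing_setting (d1 d2 : nat) (S : set (Eucl d2))
    (G T : set (Eucl (d1 + d2))) (m0 : nat) (C : nat -> seq (Eucl (d1 + d2)))
    (x0 : 'cV[R]_(d1 + d2)) (daff : nat) : Prop :=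
  [/\ [/\ space_group S, subgroup G & discrete G],
      (forall g, G g -> exists A s, [/\ orthogonal A, S s & g = dsum A s]) /\
      (forall s, S s -> exists g, G g /\ eproj g = s),
      [/\ (forall t, T t -> G t),
          (forall t, T t -> S (eproj t) /\ (eproj t).1 = 1%:M),
          (forall t t', T t -> T t' -> eproj t = eproj t' -> t = t') &
          (forall b, S (1%:M, b) -> exists t, T t /\ eproj t = (1%:M, b))],
      [/\ (0 < m0)%N,
          (forall N, (0 < N)%N -> (normal_sub G (Tpow T N) <-> (m0 %| N)%N)) &
          (forall N, inM m0 N -> reps G (Tpow T N) (C N))] &
      (forall g h, G g -> G h -> act g x0 = act h x0 -> g = h) /\
      [/\ (daff <= d1 + d2)%N,
          affdim (aff (orbit G x0)) daff,
          (forall y, orbit G x0 y -> forall i : 'I_(d1 + d2), (i < d1 + d2 - daff)%N -> y i 0 = 0) &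
          (forall g, G g -> forall y : 'cV[R]_(d1 + d2),
              (forall i : 'I_(d1 + d2), (d1 + d2 - daff <= i)%N -> y i 0 = 0) ->
              rot g *m y = y)]].

Definition periodic n (G H : set (Eucl n)) (u : Eucl n -> 'cV[R]_n) : Prop :=
  forall g t, G g -> H t -> u (emul g t) = u g.

Definition U_per n (G T : set (Eucl n)) (m0 : nat) (u : Eucl n -> 'cV[R]_n) : Prop :=
  exists N, inM m0 N /\ periodic G (Tpow T N) u.

(* ---------- Property 1 and Property 2 (finite sets as duplicate-free lists) *)
Definition property1 n (G : set (Eucl n)) (x0 : 'cV[R]_n) (Rr : seq (Eucl n)) : Prop :=
  [/\ uniq Rr, (forall h, h \in Rr -> G h), eid n \in Rr &
      aff (seq_orbit Rr x0) = aff (orbit G x0)].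

Definition property2 n (G : set (Eucl n)) (x0 : 'cV[R]_n) (Rr : seq (Eucl n)) : Prop :=
  uniq Rr /\
  exists (R1 : set (Eucl n)) (R2 : seq (Eucl n)),
    [/\ R1 (eid n), (forall g, gen R1 g <-> G g), property1 G x0 R2 &
        forall g h, R1 g -> h \in R2 -> emul g h \in Rr].

Definition U_iso n (Rr : seq (Eucl n)) (x0 : 'cV[R]_n) (v : Eucl n -> 'cV[R]_n) : Prop :=
  exists (a : 'cV[R]_n) (Sk : 'M[R]_n), skew Sk /\
    forall h, h \in Rr -> rot h *m v h = a + Sk *m (act h x0 - x0).

Definition dist_iso n (Rr : seq (Eucl n)) (x0 : 'cV[R]_n) (w : Eucl n -> 'cV[R]_n) : R :=
  inf (fun r => exists v, U_iso Rr x0 v /\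
                 r = Num.sqrt (\sum_(h <- Rr) sqnorm (w h - v h))).

Definition seminorm n (Rr : seq (Eucl n)) (x0 : 'cV[R]_n) (CN : seq (Eucl n))
    (u : Eucl n -> 'cV[R]_n) : R :=
  Num.sqrt ((size CN)%:R^-1 *
            \sum_(g <- CN) dist_iso Rr x0 (fun h => u (emul g h)) ^+ 2).

Definition U_iso00 d1 d2 (G : set (Eucl (d1 + d2))) (x0 : 'cV[R]_(d1 + d2))
    (u : Eucl (d1 + d2) -> 'cV[R]_(d1 + d2)) : Prop :=
  exists (a : 'cV[R]_(d1 + d2)) (Sk : 'M[R]_d1), skew Sk /\
    forall g, G g -> rot g *m u g = a + block_mx Sk 0 0 (0 : 'M[R]_d2) *m (act g x0 - x0).

End Euclid.

(* Main.v *)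
From HB Require Import structures.
Require Import Defs.
From mathcomp Require Import all_boot all_order all_algebra.
From mathcomp Require Import boolp classical_sets reals.
From mathcomp Require Import ring lra.
Set Implicit Arguments. Unset Strict Implicit. Unset Printing Implicit Defensive.
Import Order.TTheory GRing.Theory Num.Theory.
Local Open Scope classical_set_scope.
Local Open Scope ring_scope.

Section Grp.
Variables (R : realType) (n : nat).
Implicit Types (g h k : Eucl R n).

Lemma emulA g h k : emul (emul g h) k = emul g (emul h k).
Proof. by rewrite /emul /= mulmxA mulmxDr mulmxA addrA. Qed.

Lemma emul1g g : emul (eid R n) g = g.
Proof. by case: g => A b; rewrite /emul /= !mul1mx add0r. Qed.

Lemma emulg1 g : emul g (eid R n) = g.
Proof. by case: g => A b; rewrite /emul /= mulmx1 mulmx0 addr0. Qed.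

Lemma orthC (A : 'M[R]_n) : Defs.orthogonal A -> A *m A^T = 1%:M.
Proof. rewrite /Defs.orthogonal => H; exact: mulmx1C. Qed.

Lemma emulVg g : isE g -> emul (einv g) g = eid R n.
Proof.
case: g => A b; rewrite /isE /Defs.orthogonal /emul /einv /eid /= => ->.
by rewrite addNr.
Qed.

Lemma emulgV g : isE g -> emul g (einv g) = eid R n.
Proof.
case: g => A b; rewrite /isE /emul /einv /eid /= => /orthC H.
by rewrite H mulmxN mulmxA H mul1mx subrr.
Qed.

Lemma einvK g : isE g -> einv (einv g) = g.
Proof.
case: g => A b; rewrite /isE /einv /= => /orthC H.
by rewrite trmxK mulmxN opprK mulmxA H mul1mx.
Qed.

Lemma actM g h x : act (emul g h) x = act g (act h x).
Proof. rewrite /act /emul /= mulmxDr !mulmxA -!addrA; congr (_ + _); exact: addrC. Qed.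

Lemma act1 x : act (eid R n) x = x.
Proof. by rewrite /act /= mul1mx addr0. Qed.

Lemma epowD g a b : epow g (a + b) = emul (epow g a) (epow g b).
Proof.
elim: b => [|b IH]; first by rewrite addn0 /= emulg1.
by rewrite addnS /= IH emulA.
Qed.

Lemma epow_trans g (k : nat) : g.1 *m g.2 = g.2 ->
  (epow g k).1 *m g.2 = g.2 /\ (epow g k).2 = k%:R *: g.2.
Proof.
move=> H; elim: k => [|k [IH1 IH2]]; first by rewrite /= mul1mx scale0r.
by rewrite /= -mulmxA H IH1 IH2 mulrSr scalerDl scale1r.
Qed.

Variable G : set (Eucl R n).
Hypothesis sG : subgroup G.

Lemma G1 : G (eid R n). Proof. by case: sG. Qed.
Lemma GM g h : G g -> G h -> G (emul g h). Proof. by case: sG => _ _ H _; apply: H. Qed.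
Lemma GV g : G g -> G (einv g). Proof. by case: sG => _ _ _ H; apply: H. Qed.
Lemma GE g : G g -> isE g. Proof. by case: sG => H _ _ _; apply: H. Qed.
Lemma Gpow g (k : nat) : G g -> G (epow g k).
Proof. move=> Gg; elim: k => [|k IH] /=; [exact: G1 | exact: GM]. Qed.

End Grp.

Lemma ac6 (V : zmodType) (a1 a2 b1 b2 x y : V) :
  a1 + a2 + (b1 + b2 + (x + y)) = a1 + (b1 + x) + (a2 + (b2 + y)).
Proof.
rewrite -!addrA; congr (_ + _).
rewrite addrCA; congr (_ + _).
rewrite [x + (_ + _)]addrCA; congr (_ + _). exact: addrCA.
Qed.
Lemma lsubmxZ' (R : realType) m n1 n2 (c : R) (P : 'M[R]_(m, n1+n2)) : lsubmx (c *: P) = c *: lsubmx P.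
Proof. by apply/matrixP => i j; rewrite !mxE. Qed.
Lemma rsubmxZ' (R : realType) m n1 n2 (c : R) (P : 'M[R]_(m, n1+n2)) : rsubmx (c *: P) = c *: rsubmx P.
Proof. by apply/matrixP => i j; rewrite !mxE. Qed.
Lemma trZ' (R : realType) m n (c : R) (P : 'M[R]_(m, n)) : (c *: P)^T = c *: P^T.
Proof. by apply/matrixP => i j; rewrite !mxE. Qed.

Lemma Lcol_lin (R : realType) n (c : R) (P Q : 'M[R]_(n, 1+n)) (A : 'M[R]_n) (d : 'cV[R]_n) :
A *m (lsubmx (c *: P + Q) + (rsubmx (c *: P + Q) - (rsubmx (c *: P + Q))^T) *m d) =
c *: (A *m (lsubmx P + (rsubmx P - (rsubmx P)^T) *m d)) + A *m (lsubmx Q + (rsubmx Q - (rsubmx Q)^T) *m d).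
Proof.
rewrite !linearD /= lsubmxZ' rsubmxZ' trZ'.
rewrite !mulmxDl !mulmxDr ?mulmxN ?mulNmx -?scalemxAl -?scalemxAr ?scalerDr ?scalerN -?scalemxAl -?scalemxAr.
have E : forall Y : 'cV[R]_n, A *m - (c *: Y) = c *: (A *m - Y).
  by move=> Y; rewrite -scalerN -scalemxAr.
by rewrite E ac6.
Qed.

Section Attain.
Variables (R : realType) (n : nat) (Rr : seq (Eucl R n)) (x0 : 'cV[R]_n).
Local Notation k := (size Rr).
Local Notation hj j := (nth (eid R n) Rr j).

Definition Lcol (P : 'M[R]_(n, 1 + n)) (h : Eucl R n) : 'cV[R]_n :=
  (Defs.rot h)^T *m (lsubmx P + (rsubmx P - (rsubmx P)^T) *m (act h x0 - x0)).

Definition FL (P : 'M[R]_(n, 1 + n)) : 'M[R]_(k, n) :=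
  \matrix_(j < k, i < n) Lcol P (hj j) i 0.

Lemma FLE P (j : 'I_k) i : FL P j i = Lcol P (hj j) i 0.
Proof. by rewrite mxE. Qed.

Lemma addZE m p (c : R) (X Y : 'M[R]_(m, p)) i j : (c *: X + Y) i j = c * X i j + Y i j.
Proof. by rewrite !mxE. Qed.

Lemma Lcol_linE c P Q h : Lcol (c *: P + Q) h = c *: Lcol P h + Lcol Q h.
Proof. by rewrite /Lcol Lcol_lin. Qed.

Lemma FL_lin : linear FL.
Proof.
move=> c P Q; apply/matrixP => j i.
by rewrite FLE Lcol_linE !addZE !FLE.
Qed.

HB.instance Definition _ := GRing.isLinear.Build R _ _ _ FL FL_lin.


Lemma Uiso_FL v : (forall h, h \in Rr -> isE h) -> U_iso Rr x0 v ->
  exists P, forall h, h \in Rr -> v h = Lcol P h.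
Proof.
move=> HE [a [Sk [skS Hv]]].
exists (row_mx a (2^-1 *: Sk)) => h hR.
rewrite /Lcol row_mxKl row_mxKr trZ' skS scalerN opprK -scalerDl.
have -> : (2^-1 + 2^-1 : R) = 1.
  by field.
rewrite scale1r -Hv //.
have := HE h hR; rewrite /isE /Defs.orthogonal /Defs.rot => H.
by rewrite mulmxA H mul1mx.
Qed.

Lemma FL_Uiso w P : (forall h, h \in Rr -> isE h) ->
  (forall h, h \in Rr -> w h = Lcol P h) -> U_iso Rr x0 w.
Proof.
move=> HE Hw; exists (lsubmx P), (rsubmx P - (rsubmx P)^T); split.
  rewrite /Defs.skew; apply/matrixP => i j; rewrite !mxE opprB. done.
move=> h hR; rewrite Hw // /Lcol mulmxA.
have := HE h hR; rewrite /isE /Defs.rot => /orthC ->.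
by rewrite mul1mx.
Qed.

Lemma single_le_sum (I : eqType) (r : seq I) (F : I -> R) x :
  (forall y, 0 <= F y) -> x \in r -> F x <= \sum_(y <- r) F y.
Proof.
move=> F0 xr; rewrite (big_rem x xr) /= lerDl.
by apply: sumr_ge0 => y _.
Qed.

Lemma entry_le_sqnorm (v : 'cV[R]_n) i : v i 0 ^+ 2 <= sqnorm v.
Proof.
rewrite /sqnorm (bigD1 i) //= lerDl.
by apply: sumr_ge0 => y _; exact: sqr_ge0.
Qed.

Lemma sqnorm_ge0 (v : 'cV[R]_n) : 0 <= sqnorm v.
Proof. by apply: sumr_ge0 => y _; exact: sqr_ge0. Qed.

Lemma attain w : (forall h, h \in Rr -> isE h) -> dist_iso Rr x0 w = 0 -> U_iso Rr x0 w.
Proof.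
move=> HE d0.
pose Wm : 'M[R]_(k, n) := \matrix_(j < k, i < n) w (hj j) i 0.
have step1 : forall eps : R, 0 < eps -> exists P, forall j i, `|(Wm - FL P) j i| <= eps.
  move=> eps eps0.
  have ne : (fun r => exists v, U_iso Rr x0 v /\
                 r = Num.sqrt (\sum_(h <- Rr) sqnorm (w h - v h))) !=set0.
    exists (Num.sqrt (\sum_(h <- Rr) sqnorm (w h - 0))), (fun _ => 0); split => //.
    exists 0, 0; split; first by rewrite /Defs.skew trmx0 oppr0.
    by move=> h _; rewrite mulmx0 mul0mx addr0.
  have hlt : dist_iso Rr x0 w < eps by rewrite d0.
  have [y [v [vU ->]] yeps] := inf_lt ne hlt.
  have [P HP] := Uiso_FL HE vU.
  exists P => j i.
  have hR : hj j \in Rr by apply: mem_nth.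
  have -> : (Wm - FL P) j i = (w (hj j) - v (hj j)) i 0.
    by rewrite HP // !mxE.
  rewrite -sqrtr_sqr; apply: ltW; apply: le_lt_trans yeps.
  rewrite ler_sqrt; last by apply: sumr_ge0 => z _; exact: sqnorm_ge0.
  apply: le_trans (entry_le_sqnorm _ i) _.
  exact: (@single_le_sum _ Rr (fun h => sqnorm (w h - v h)) (hj j) (fun z => sqnorm_ge0 _) hR).
pose B := lin_mx FL.
pose K := cokermx B.
have FK : forall P, mxvec (FL P) *m K = 0.
  move=> P; apply/eqP; rewrite -submxE -mul_vec_lin; exact: submxMl.
have WK : mxvec Wm *m K = 0.
  apply/rowP => l; rewrite [X in _ = X]mxE.
  set y := (mxvec Wm *m K) 0 l.
  apply/eqP; apply/negPn/negP => ny.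
  pose Cst := \sum_q `|K q l|.
  have C0 : 0 <= Cst by apply: sumr_ge0 => q _.
  have C1 : 0 < Cst + 1 by lra.
  pose eps := `|y| / (Cst + 1).
  have eps0 : 0 < eps.
    rewrite /eps; apply: divr_gt0 => //. by rewrite normr_gt0.
  have [P HP] := step1 eps eps0.
  have ye : y = (mxvec (Wm - FL P) *m K) 0 l.
    by rewrite linearB /= mulmxBl FK subr0.
  have : `|y| <= eps * Cst.
    rewrite ye mxE; apply: le_trans (ler_norm_sum _ _ _) _.
    rewrite /Cst mulr_sumr; apply: ler_sum => q _; rewrite normrM ler_wpM2r //.
    by case/mxvec_indexP: q => a b; rewrite mxvecE.
  have -> : eps * Cst = eps * (Cst + 1) - eps by rewrite mulrDr mulr1 addrK.
  rewrite /eps divfK ?gt_eqF // => H.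
  move: eps0 H; rewrite /eps => e0 H; lra.
have : (mxvec Wm <= B)%MS by rewrite submxE WK.
case/submxP => D HD.
have {}HD : Wm = FL (vec_mx D).
  apply: (can_inj mxvecK); rewrite HD -mul_vec_lin vec_mxK //.
apply: (FL_Uiso (P := vec_mx D)) => // h hR.
apply/matrixP => i z; rewrite (ord1 z).
have hi : (index h Rr < k)%N by rewrite index_mem.
have := congr1 (fun M : 'M[R]_(k, n) => M (Ordinal hi) i) HD.
by rewrite mxE FLE /= nth_index.
Qed.
End Attain.

Section Gen.
Variables (R : realType) (n : nat).

Lemma affX (X M : 'M[R]_n) (c y x0 : 'cV[R]_n) (q : Eucl R n) :
  X *m (c + M *m (act q y - x0)) =
  (X *m c + X *m M *m q.2 - X *m M *m x0) + (X *m M *m q.1) *m y.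
Proof.
rewrite /act !mulmxDr ?mulmxN !mulmxA.
rewrite -!addrA; congr (_ + _).
by rewrite addrC -!addrA.
Qed.

Lemma orth_entry (Q : 'M[R]_n) i j : Defs.orthogonal Q -> `|Q i j| <= 1.
Proof.
move=> H.
have : \sum_l Q l j ^+ 2 = 1.
  have e1 : (1%:M : 'M[R]_n) j j = 1 by rewrite mxE eqxx.
  rewrite -e1 -H mxE; apply: eq_bigr => l _; by rewrite mxE expr2.
move=> S1.
rewrite -sqrtr_sqr -sqrtr1 ler_sqrt //; rewrite -S1.
rewrite (bigD1 i) //= lerDl; apply: sumr_ge0 => l _; exact: sqr_ge0.
Qed.

Lemma bound_Qv (Q : 'M[R]_n) (v : 'cV[R]_n) i : Defs.orthogonal Q ->
  `|(Q *m v) i 0| <= \sum_j `|v j 0|.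
Proof.
move=> H; rewrite mxE; apply: le_trans (ler_norm_sum _ _ _) _.
apply: ler_sum => j _; rewrite normrM; apply: ler_piMl => //; exact: orth_entry.
Qed.

Lemma bound_Mv (M : 'M[R]_n) (v : 'cV[R]_n) i :
  `|(M *m v) i 0| <= \sum_j `|M i j| * `|v j 0|.
Proof.
rewrite mxE; apply: le_trans (ler_norm_sum _ _ _) _.
by apply: ler_sum => j _; rewrite normrM.
Qed.

Lemma seminorm_zero (Rr CN : seq (Eucl R n)) x0 u :
  seminorm Rr x0 CN u = 0 -> (0 < size CN)%N ->
  forall c, c \in CN -> dist_iso Rr x0 (fun h => u (emul c h)) = 0.
Proof.
move=> H s0 c cC; apply/eqP; rewrite -sqrf_eq0 eq_le sqr_ge0 andbT.
move/eqP: H; rewrite sqrtr_eq0 pmulr_rle0; last by rewrite invr_gt0 ltr0n.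
apply: le_trans.
exact: (@single_le_sum R _ CN (fun c => dist_iso Rr x0 (fun h => u (emul c h)) ^+ 2) c (fun _ => sqr_ge0 _) cC).
Qed.

Lemma dist_iso0 (Rr : seq (Eucl R n)) x0 w : U_iso Rr x0 w -> dist_iso Rr x0 w = 0.
Proof.
move=> Uw.
pose E := (fun r => exists v, U_iso Rr x0 v /\ r = Num.sqrt (\sum_(h <- Rr) sqnorm (w h - v h))).
change (inf E = 0).
have E0 : E 0.
  exists w; split => //.
  rewrite big1 ?sqrtr0 // => h _; rewrite subrr /sqnorm big1 // => i _.
  by rewrite mxE expr0n.
have lb : lbound E 0 by move=> r [v [_ ->]]; exact: sqrtr_ge0.
apply/eqP; rewrite eq_le; apply/andP; split.
  by apply: (ge_inf (E := E)) => //; exists 0.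
by apply: lb_le_inf => //; exists 0.
Qed.

End Gen.

Section Glue.
Variables (R : realType) (d : nat) (G : set (Eucl R d)) (x0 : 'cV[R]_d)
  (Rr : seq (Eucl R d)) (R1 : set (Eucl R d)) (R2 : seq (Eucl R d))
  (u : Eucl R d -> 'cV[R]_d).
Hypotheses (sG : subgroup G) (RrG : forall h, h \in Rr -> G h)
  (R1id : R1 (eid R d)) (genG : forall g, gen R1 g <-> G g)
  (p1 : property1 G x0 R2)
  (Hmul : forall g h, R1 g -> h \in R2 -> emul g h \in Rr)
  (W : forall g, G g -> exists a' S', Defs.skew S' /\
     forall h, h \in Rr -> Defs.rot h *m u (emul g h) = a' + S' *m (act h x0 - x0)).

Lemma R2Rr h : h \in R2 -> h \in Rr.
Proof. by move=> hR; rewrite -(emul1g h); apply: Hmul. Qed.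

Lemma R2G h : h \in R2 -> G h.
Proof. by case: p1 => _ H _ _; apply: H. Qed.

Lemma R1G r : R1 r -> G r.
Proof. by move=> r1; apply/genG; apply: gen_in. Qed.

Lemma idRr : eid R d \in Rr.
Proof. apply: R2Rr; by case: p1. Qed.

Lemma aff_ext (c : 'cV[R]_d) (M : 'M[R]_d) :
  (forall h, h \in R2 -> c + M *m act h x0 = 0) ->
  forall g, G g -> c + M *m act g x0 = 0.
Proof.
move=> H g Gg.
have : aff (Defs.orbit G x0) (act g x0).
  exists 1%N, (fun _ => act g x0), (fun _ => 1); split.
  - by move=> _; exists g.
  - by rewrite big_ord1.
  - by rewrite big_ord1 scale1r.
case: p1 => _ _ _ <-.
case=> k [p [l [Hp Hl ->]]].
have -> : c = \sum_(i < k) l i *: c by rewrite -scaler_suml Hl scale1r.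
rewrite mulmx_sumr -big_split /=; apply: big1 => i _.
rewrite -scalemxAr -scalerDr.
case: (Hp i) => h [hR2 ->]; by rewrite H // scaler0.
Qed.

Lemma aff_ext2 (c1 c2 : 'cV[R]_d) (M1 M2 : 'M[R]_d) :
  (forall h, h \in R2 -> c1 + M1 *m act h x0 = c2 + M2 *m act h x0) ->
  forall g, G g -> c1 + M1 *m act g x0 = c2 + M2 *m act g x0.
Proof.
move=> H g Gg; apply/eqP; rewrite -subr_eq0; apply/eqP.
have -> : c1 + M1 *m act g x0 - (c2 + M2 *m act g x0) =
   (c1 - c2) + (M1 - M2) *m act g x0.
  by rewrite mulmxBl opprD !addrA; congr (_ + _); rewrite addrAC.
apply: aff_ext => // h hR; have := H h hR.
move/eqP; rewrite -subr_eq0 => /eqP <-.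
by rewrite mulmxBl opprD !addrA; congr (_ + _); rewrite addrAC.
Qed.


Lemma aff_ext3 (X1 X2 M1 M2 : 'M[R]_d) (c1 c2 : 'cV[R]_d) (q1 q2 : Eucl R d) :
  (forall h, h \in R2 -> X1 *m (c1 + M1 *m (act q1 (act h x0) - x0)) =
                        X2 *m (c2 + M2 *m (act q2 (act h x0) - x0))) ->
  forall g, G g -> X1 *m (c1 + M1 *m (act q1 (act g x0) - x0)) =
                   X2 *m (c2 + M2 *m (act q2 (act g x0) - x0)).
Proof.
move=> H g Gg; rewrite !affX; apply: aff_ext2 => // h hR.
by have := H h hR; rewrite !affX.
Qed.

Variables (a : 'cV[R]_d) (S : 'M[R]_d).
Hypothesis HaS : forall h, h \in Rr -> Defs.rot h *m u h = a + S *m (act h x0 - x0).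

Definition Kinv g := exists a' S',
  (forall h, h \in Rr -> Defs.rot h *m u (emul g h) = a' + S' *m (act h x0 - x0)) /\
  forall h, G h -> Defs.rot g *m (a' + S' *m (act h x0 - x0)) = a + S *m (act g (act h x0) - x0).

Lemma K_right g r : G g -> R1 r -> Kinv g -> Kinv (emul g r).
Proof.
move=> Gg r1 [a' [S' [K1 K2]]].
have Ggr : G (emul g r) by apply: (GM sG) => //; exact: R1G.
have [a'' [S'' [_ W1]]] := W Ggr.
exists a'', S''; split => // h Gh.
rewrite -[in LHS](act1 (act h x0)) -[RHS]mul1mx.
apply: aff_ext3 Gh => h' hR2.
rewrite act1 mul1mx -W1 ?R2Rr //.
have -> : Defs.rot (emul g r) *m (Defs.rot h' *m u (emul (emul g r) h')) =
   Defs.rot g *m (Defs.rot (emul r h') *m u (emul g (emul r h'))).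
  by rewrite emulA /Defs.rot /= !mulmxA.
rewrite K1; last exact: Hmul.
rewrite K2; last by apply: (GM sG); [exact: R1G | exact: R2G].
by rewrite !actM.
Qed.

Lemma K_left g r : G g -> R1 r -> Kinv (emul g r) -> Kinv g.
Proof.
move=> Gg r1 [a'' [S'' [K1 K2]]].
have Gr : G r by exact: R1G.
have [a' [S' [_ W1]]] := W Gg.
exists a', S'; split => // h Gh.
have Gh1 : G (emul (einv r) h) by apply: (GM sG) => //; exact: (GV sG).
have -> : act h x0 = act r (act (emul (einv r) h) x0).
  by rewrite -actM -emulA emulgV ?emul1g //; exact: (GE sG).
rewrite -[in RHS](actM g r) -[RHS]mul1mx.
apply: aff_ext3 Gh1 => h' hR2.
rewrite mul1mx -actM -W1; last exact: Hmul.
have -> : Defs.rot g *m (Defs.rot (emul r h') *m u (emul g (emul r h'))) =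
   Defs.rot (emul g r) *m (Defs.rot h' *m u (emul (emul g r) h')).
  by rewrite emulA /Defs.rot /= !mulmxA.
rewrite K1 ?R2Rr // K2 //; exact: R2G.
Qed.

Lemma K_all : forall g, G g -> Kinv g.
Proof.
have K1 : Kinv (eid R d).
  exists a, S; split => [h hR|h Gh]; first by rewrite emul1g HaS.
  by rewrite mul1mx act1.
have Q : forall x, gen R1 x -> forall g, G g -> (Kinv g <-> Kinv (emul g x)).
  move=> x; elim => {x}.
  - by move=> g _; rewrite emulg1.
  - move=> r r1 g Gg; split; [exact: K_right | exact: K_left].
  - move=> x y gx IHx gy IHy g Gg.
    have Gx : G x by apply/genG.
    rewrite -emulA; apply: (iff_trans (IHx g Gg)); apply: IHy; exact: (GM sG).
  - move=> x gx IHx g Gg.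
    have Gx : G x by apply/genG.
    have Gg1 : G (emul g (einv x)) by apply: (GM sG) => //; exact: (GV sG).
    have := IHx _ Gg1; rewrite emulA emulVg ?emulg1; last exact: (GE sG).
    by move=> H; split => /H.
move=> g Gg; have := Q g (proj2 (genG g) Gg) (eid R d) (G1 sG).
by rewrite emul1g => H; apply/H.
Qed.

Lemma glue : forall g, G g -> Defs.rot g *m u g = a + S *m (act g x0 - x0).
Proof.
move=> g Gg; have [a' [S' [K1 K2]]] := K_all Gg.
have := K1 _ idRr; rewrite emulg1 act1 subrr mulmx0 addr0 /Defs.rot /= mul1mx => ug.
have := K2 _ (G1 sG); rewrite act1 subrr mulmx0 addr0 => <-.
by rewrite ug.
Qed.
End Glue.

Lemma zid (V : zmodType) (a y x w : V) : a + (y + x - w) - a - y + w = x.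
Proof. by rewrite [a + _]addrC addrK addrAC subrK [y + x]addrC addrK. Qed.

Lemma norm4 (R : numDomainType) (x y z w : R) : `|x - y - z + w| <= `|x| + `|y| + `|z| + `|w|.
Proof.
apply: le_trans (ler_normD _ _) _; rewrite lerD2r.
apply: le_trans (ler_normB _ _) _; rewrite lerD2r; exact: ler_normB.
Qed.

Lemma mx4E (R : ringType) m p (X Y Z W : 'M[R]_(m, p)) i j :
  (X - Y - Z + W) i j = X i j - Y i j - Z i j + W i j.
Proof. by rewrite !mxE. Qed.

Lemma archi_zero (R : realType) (z Cst : R) :
  (forall m : nat, `|m%:R * z| <= Cst) -> z = 0.
Proof.
move=> H; apply/eqP; apply/negPn/negP => nz.
have zp : 0 < `|z| by rewrite normr_gt0.
have C0 : 0 <= Cst by apply: le_trans (H 0%N); exact: normr_ge0.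
have Hb := @archi_boundP R (Cst / `|z|) (divr_ge0 C0 (ltW zp)).
have := H (Num.bound (Cst / `|z|)); rewrite normrM normr_nat.
rewrite -(ler_pdivlMr _ _ zp) => H2.
by move: (lt_le_trans Hb H2); rewrite ltxx.
Qed.

Section Block.
Variables (R : realType) (d1 d2 : nat) (G T : set (Eucl R (d1 + d2)))
  (Ssp : set (Eucl R d2)) (N : nat) (u : Eucl R (d1 + d2) -> 'cV[R]_(d1 + d2))
  (x0 a : 'cV[R]_(d1 + d2)) (S : 'M[R]_(d1 + d2)).
Hypotheses (sG : subgroup G) (N0 : (0 < N)%N)
  (Gform : forall g, G g -> exists A s, [/\ Defs.orthogonal A, Ssp s & g = dsum A s])
  (TG : forall t, T t -> G t)
  (Tonto : forall b, Ssp (1%:M, b) -> exists t, T t /\ eproj t = (1%:M, b))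
  (per : periodic G (Tpow T N) u)
  (glue : forall g, G g -> Defs.rot g *m u g = a + S *m (act g x0 - x0)).

Lemma Se0 b : Ssp (1%:M, b) -> S *m col_mx 0 b = 0.
Proof.
move=> Sb.
have [t [Tt et]] := Tonto Sb.
have Gt := TG Tt.
have [A [s [oA Ss ts]]] := Gform Gt.
have es : s = (1%:M, b).
  by rewrite -et ts /eproj /dsum /= block_mxKdr col_mxKd; case: s {ts et Ss}.
set e : 'cV[R]_(d1 + d2) := col_mx 0 b.
have t2 : t.2 = e by rewrite ts es.
have te : t.1 *m t.2 = t.2.
  by rewrite ts es /dsum /= mul_block_col !mulmx0 !mul0mx mul1mx !add0r.
have uE : forall m, u (epow t (N * m)) = u (eid R _).
  elim => [|m IH]; first by rewrite muln0.
  rewrite mulnSr epowD per //; first exact: Gpow.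
  by exists t.
have ua : u (eid R _) = a.
  have := glue (G1 sG); rewrite act1 subrr mulmx0 addr0 /Defs.rot /= mul1mx. done.
apply/matrixP => i j; rewrite (ord1 j) [RHS]mxE.
pose Q m := (epow t (N * m)).1.
have oQ : forall m, Defs.orthogonal (Q m).
  by move=> m; apply: (GE sG); apply: Gpow.
pose Cst := \sum_j `|a j 0| + `|a i 0| + (\sum_l `|S i l| * \sum_j `|x0 j 0|) + `|(S *m x0) i 0|.
suff : N%:R * (S *m e) i 0 = 0.
  move/eqP; rewrite mulf_eq0 pnatr_eq0 => /orP [/eqP N00|/eqP //]; by move: N0; rewrite N00.
apply: (archi_zero (Cst := Cst)) => m.
have Gtm : G (epow t (N * m)) by exact: Gpow.
have [_ t2m] := epow_trans (N * m) te.
have gl := glue Gtm; rewrite uE ua /act t2m t2 in gl.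
have eq : (N * m)%:R *: (S *m e) = Q m *m a - a - S *m (Q m *m x0) + S *m x0.
  rewrite /Q /Defs.rot in gl *; rewrite gl !mulmxDr mulmxN -scalemxAr.
  by rewrite zid.
have -> : m%:R * (N%:R * (S *m e) i 0) = ((N * m)%:R *: (S *m e)) i 0.
  by rewrite [RHS]mxE natrM mulrA [m%:R * _]mulrC.
rewrite eq mx4E.
apply: le_trans (norm4 _ _ _ _) _.
rewrite /Cst; apply: lerD; [apply: lerD; [apply: lerD => //|] |] => //.
- exact: bound_Qv.
- apply: le_trans (bound_Mv _ _ _) _.
  apply: ler_sum => l _.
  apply: ler_wpM2l => //; exact: bound_Qv.
Qed.

Lemma S_block (V : 'M[R]_d2) : V \in unitmx ->
  (forall b : 'cV[R]_d2, Ssp (1%:M, b) <->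
     exists z : 'cV[int]_d2, b = V *m map_mx (fun k : int => k%:~R) z) ->
  Defs.skew S -> S = block_mx (ulsubmx S) 0 0 0 /\ Defs.skew (ulsubmx S).
Proof.
move=> Vu HV skS.
have H1 : S *m col_mx 0 V = 0.
  apply/matrixP => i j; rewrite [RHS]mxE.
  have : Ssp (1%:M, V *m delta_mx j 0).
    apply/HV; exists (delta_mx j 0); congr (_ *m _); apply/matrixP => p q.
    by rewrite !mxE; case: (_ && _).
  move/Se0 => H.
  have -> : (S *m col_mx 0 V) i j = col j (S *m col_mx 0 V) i 0 by rewrite [RHS]mxE.
  by rewrite colE -mulmxA mul_col_mx mul0mx H mxE.
have H2 : S *m col_mx 0 1%:M = 0.
  have -> : col_mx (0 : 'M[R]_(d1, d2)) 1%:M = col_mx 0 V *m invmx V.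
    by rewrite mul_col_mx mul0mx mulmxV.
  by rewrite mulmxA H1 mul0mx.
move: H2 skS; rewrite -[S]submxK mul_block_col !mulmx0 !mulmx1 !add0r -col_mx0.
case/eq_col_mx => -> ->.
rewrite /Defs.skew tr_block_mx opp_block_mx trmx0 oppr0.
case/eq_block_mx => ulS _ dl0 _.
rewrite block_mxKul; split => //.
by move/eqP: dl0; rewrite eq_sym oppr_eq0 => /eqP ->.
Qed.
End Block.

Lemma per_conj (R : realType) n (G TN : set (Eucl R n)) u g t h :
  subgroup G -> normal_sub G TN -> periodic G TN u ->
  G g -> TN t -> G h -> u (emul (emul g t) h) = u (emul g h).
Proof.
move=> sG [_ _ Hn] per Gg Tt Gh.
have := Hn _ _ (GV sG Gh) Tt; rewrite einvK; last exact: (GE sG).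
move=> T1.
have -> : emul (emul g t) h = emul (emul g h) (emul (emul (einv h) t) h).
  rewrite [LHS]emulA [RHS]emulA; congr (emul g _).
  by rewrite -!emulA emulgV ?emul1g //; exact: (GE sG).
by rewrite per //; exact: (GM sG).
Qed.

Lemma lin_id (R : realType) n (X M A : 'M[R]_n) (a y z : 'cV[R]_n) :
  X *m (a + M *m (A *m y + z)) = X *m (a + M *m z) + X *m M *m A *m y.
Proof.
rewrite !mulmxDr !mulmxA -!addrA; congr (_ + _); exact: addrC.
Qed.

Unset Implicit Arguments.
Theorem theorem3p27 (R : realType) (d1 d2 : nat) (S : set (Eucl R d2))
    (G T : set (Eucl R (d1 + d2))) (m0 : nat) (C : nat -> seq (Eucl R (d1 + d2)))
    (x0 : 'cV[R]_(d1 + d2)) (daff : nat) :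
  standing_setting S G T m0 C x0 daff ->
  forall Rr : seq (Eucl R (d1 + d2)),
    (forall h, h \in Rr -> G h) ->
    property2 G x0 Rr ->
    forall (u : Eucl R (d1 + d2) -> 'cV[R]_(d1 + d2)) (N : nat),
      inM m0 N -> periodic G (Tpow T N) u ->
      (seminorm Rr x0 (C N) u = 0 <-> U_iso00 G x0 u).
Proof.
move=> [[sS sG dG] [Gform Gonto] [TG Tproj Tinj Tonto] [m0pos Hnorm Hreps] [ginj _]].
move=> Rr RrG [uniqR [R1 [R2 [R1id genG p1 Hmul]]]] u N [N0 m0N] per.
have nTN : normal_sub G (Tpow T N) by apply/Hnorm.
have [_ repsG reps_cov] := Hreps N (conj N0 m0N).
have RrE : forall h, h \in Rr -> isE h by move=> h /RrG /(GE sG).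
split.
- move=> sn0.
  have s0 : (0 < size (C N))%N.
    have [x [xin _ _]] := reps_cov _ (G1 sG).
    by rewrite lt0n size_eq0; apply/eqP => e; rewrite e in xin.
  have W : forall g, G g -> exists a' S', Defs.skew S' /\
     forall h, h \in Rr -> Defs.rot h *m u (emul g h) = a' + S' *m (act h x0 - x0).
    move=> g Gg; have [c [cin Tc _]] := reps_cov _ Gg.
    have Uc := attain RrE (seminorm_zero sn0 s0 cin).
    have [a' [S' [sk H]]] := Uc.
    exists a', S'; split => // h hR; rewrite -H //.
    have Gc := repsG c cin.
    have -> : g = emul c (emul (einv c) g).
      by rewrite -emulA emulgV ?emul1g //; exact: (GE sG).
    by rewrite (per_conj sG nTN per Gc Tc (RrG _ hR)).
  have [a [S0 [skS HaS]]] := W _ (G1 sG).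
  have HaS' : forall h, h \in Rr -> Defs.rot h *m u h = a + S0 *m (act h x0 - x0).
    by move=> h hR; rewrite -HaS // emul1g.
  have gl := glue sG R1id genG p1 Hmul W HaS'.
  case: sS => _ _ [V [Vu HV]].
  have [Sb skb] := S_block sG N0 Gform TG Tonto per gl Vu HV skS.
  exists a, (ulsubmx S0); split => // g Gg.
  by rewrite -Sb gl.
- move=> [a [Sk [skSk H]]].
  rewrite /seminorm big_seq big1 ?mulr0 ?sqrtr0 // => c cin.
  rewrite dist_iso0 ?expr0n //.
  have Gc := repsG c cin.
  pose A := Defs.rot c.
  pose S' : 'M[R]_(d1 + d2) := block_mx Sk 0 0 0.
  have oA : A^T *m A = 1%:M by have := GE sG Gc.
  have skS' : S'^T = - S'.
    by rewrite /S' tr_block_mx !trmx0 skSk opp_block_mx !oppr0.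
  exists (A^T *m (a + S' *m (act c x0 - x0))), (A^T *m S' *m A); split.
    by rewrite /Defs.skew !trmx_mul trmxK skS' mulNmx mulmxN mulmxA.
  move=> h hR.
  have Gh := RrG _ hR.
  have -> : Defs.rot h *m u (emul c h) = A^T *m (Defs.rot (emul c h) *m u (emul c h)).
    by rewrite /Defs.rot /= !mulmxA oA mul1mx.
  rewrite H; last exact: (GM sG).
  have -> : act (emul c h) x0 - x0 = A *m (act h x0 - x0) + (act c x0 - x0).
    rewrite actM /act /A /Defs.rot mulmxBr !addrA; congr (_ - _).
    by rewrite addrNK.
  exact: lin_id.
Qed.
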